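(* Let $\mathcal{C}\subseteq\mathbb{F}_q^n$ be a GQC code with orbit lengths $l_1,\dots,l_m$, and let $\mathcal{C}^\perp$ be its dual code. Let $\mathcal{G}=\{g_1,\dots,g_m\}$ be a Gröbner basis of $\overline{\mathcal{C}}$ and $\mathcal{H}=\{h_1,\dots,h_m\}$ a Gröbner basis of $\overline{\mathcal{C}^\perp}$, both with respect to an arbitrary monomial ordering on $\mathbb{F}_q[t]^m$, and regard their elements as elements of $M$ via $\pi$. Then for all $1\le i,j\le m$, $\langle g_i,h_j\rangle\equiv\langle h_j,g_i\rangle\equiv 0 \pmod{t^{l}-1}$, where $l$ is the modulus appearing in the definition of each respective scalar product.
   Context: Let $q$ be a prime power. A linear code $\mathcal{C}\subseteq\mathbb{F}_q^n$ is a generalized quasi-cyclic (GQC) code with orbit lengths $l_1,\dots,l_m$ ($m<n$, $l_1+\dots+l_m=n$) if, writing each codeword as $c=(c_1,\dots,c_m)$ with blocks $c_i=(c_{i,0},\dots,c_{i,l_i-1})$ of length $l_i$, $\mathcal{C}$ is closed under the simultaneous local cyclic shift $\sigma$ sending each block $c_i$ to $(c_{i,l_i-1},c_{i,0},\dots,c_{i,l_i-2})$. Identify $c$ with $(c_1(t),\dots,c_m(t))\in M:=\bigoplus_{i=1}^m\mathbb{F}_q[t]/(t^{l_i}-1)$, where $c_i(t)=\sum_{j=0}^{l_i-1}c_{i,j}t^j$; then $\sigma$ is multiplication by $t$ and $\mathcal{C}$ is an $\mathbb{F}_q[t]$-submodule of $M$. Elements of $\mathbb{F}_q[t]/(t^{l_i}-1)$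 are identified with their representatives of degree $<l_i$. Let $\pi:\mathbb{F}_q[t]^m\to M$ be the natural projection and $\overline{\mathcal{C}}:=\pi^{-1}(\mathcal{C})$, a submodule of $\mathbb{F}_q[t]^m$. The dual code $\mathcal{C}^\perp$ (with respect to the standard bilinear form on $\mathbb{F}_q^n$) is again GQC with the same orbit lengths, and $\overline{\mathcal{C}^\perp}:=\pi^{-1}(\mathcal{C}^\perp)$. For $a(t)=\sum_{j=0}^{l-1}a_jt^j\in\mathbb{F}_q[t]/(t^l-1)$ put $\widehat{a}(t):=a_0+a_{l-1}t+\dots+a_1t^{l-1}$. For $u=(u_1,\dots,u_m),v=(v_1,\dots,v_m)\in M$ define the scalar product $\langle u,v\rangle:=\sum_{i=1}^m u_i(t)\widehat{v}_i(t)\sum_{k=0}^{l/l_i-1}t^{kl_i}\bmod (t^l-1)$, where $\widehat{v}_i$ is computed in $\mathbb{F}_q[t]/(t^{l_i}-1)$ and $l$ is the least common multiple of those $l_i$ for which both $u_i$ and $v_i$ are nonzero. *)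

(* Defs.v *)
From HB Require Import structures.
From mathcomp Require Import all_boot all_order all_algebra.
Set Implicit Arguments. Unset Strict Implicit. Unset Printing Implicit Defensive.
Import Order.TTheory GRing.Theory.
Local Open Scope ring_scope.

Section GQC.
Variables (F : fieldType) (m : nat) (l : 'I_m -> nat).

(* Elements of F[t]^m (and, when reduced, of M = (+)_i F[t]/(t^{l_i}-1)). *)
Definition vec := 'I_m -> {poly F}.

Definition inM (v : vec) : Prop := forall i, (size (v i) <= l i)%N.

Definition piM (v : vec) : vec := fun i => v i %% ('X^(l i) - 1).

Definition shiftM (v : vec) : vec := piM (fun i => 'X * v i).

(* A linear code in M (via the identification F_q^n = M). *)
Definition linear_code (C : vec -> Prop) : Prop :=
  (forall v, C v -> inM v) /\ C (fun _ => 0) /\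
  (forall u v, C u -> C v -> C (fun i => u i + v i)) /\
  (forall (a : F) v, C v -> C (fun i => a *: v i)).

Definition GQC_code (C : vec -> Prop) : Prop :=
  linear_code C /\ forall v, C v -> C (shiftM v).

Definition stdform (u v : vec) : F :=
  \sum_(i < m) \sum_(j < l i) (u i)`_j * (v i)`_j.

Definition dual (C : vec -> Prop) : vec -> Prop :=
  fun d => inM d /\ forall c, C c -> stdform c d = 0.

Definition Cbar (C : vec -> Prop) : vec -> Prop := fun v => C (piM v).

Definition hatp (L : nat) (a : {poly F}) : {poly F} :=
  \poly_(j < L) a`_((L - j) %% L).

Definition sp_mod (u v : vec) : nat :=
  \big[lcmn/1%N]_(i < m | (u i != 0) && (v i != 0)) l i.

Definition scalar_prod (u v : vec) : {poly F} :=
  let L := sp_mod u v in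
  (\sum_(i < m | (u i != 0) && (v i != 0))
      u i * hatp (l i) (v i) * \sum_(k < L %/ l i) 'X^(k * l i))
  %% ('X^L - 1).

End GQC.

Section Groebner.
Variables (F : fieldType) (m : nat).

(* Module monomials t^a e_i are encoded as pairs (a, i). A monomial ordering
   is a strict total order, well-founded, compatible with multiplication by t^c. *)
Definition monomial_order (lt : rel (nat * 'I_m)) : Prop :=
  (forall x, ~~ lt x x) /\
  (forall x y z, lt x y -> lt y z -> lt x z) /\
  (forall x y, x != y -> lt x y || lt y x) /\
  well_founded (fun x y => lt x y) /\
  (forall a b c i j, lt (a, i) (b, j) -> lt (a + c, i)%N (b + c, j)%N).

Definition is_LM (lt : rel (nat * 'I_m)) (v : vec F m) (x : nat * 'I_m) : Prop :=
  (v x.2)`_(x.1) != 0 /\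
  forall y : nat * 'I_m, (v y.2)`_(y.1) != 0 -> y != x -> lt y x.

Definition groebner_basis (lt : rel (nat * 'I_m)) (N : vec F m -> Prop)
  (k : nat) (G : 'I_k -> vec F m) : Prop :=
  (forall s, N (G s)) /\
  forall f, N f -> (exists i, f i != 0) ->
    exists s a b i, is_LM lt (G s) (a, i) /\ is_LM lt f (b, i) /\ (a <= b)%N.

End Groebner.

(* Main.v *)
Require Import Defs.
From HB Require Import structures.
From mathcomp Require Import all_boot all_order all_algebra.
From mathcomp Require Import zify.
Import GRing.Theory.
Local Open Scope ring_scope.

Section Aux.
Variable F : fieldType.

Lemma modp_sum (I : Type) (r : seq I) (P : pred I) (f : I -> {poly F}) d :
  (\sum_(i <- r | P i) f i) %% d = \sum_(i <- r | P i) (f i %% d).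
Proof.
elim/big_rec2: _ => [|i y1 y2 _ <-]; first by rewrite mod0p.
by rewrite modpD.
Qed.

Lemma modXn (l e : nat) : (0 < l)%N ->
  ('X^e : {poly F}) %% ('X^l - 1) = 'X^(e %% l).
Proof.
move=> hl.
have -> : ('X^e : {poly F}) = 'X^(e %% l) + 'X^(e %% l) * (\sum_(i < e %/ l) ('X^l) ^+ i) * ('X^l - 1).
  rewrite -mulrA [_ * ('X^l - 1)]mulrC -subrX1 -exprM mulrBr mulr1 -exprD.
  by rewrite addrC subrK addnC mulnC -divn_eq.
rewrite modpD modp_mull addr0 modp_small // size_Xn_sub_1 // size_polyXn ltnS.
by rewrite ltn_mod.
Qed.

Lemma coef_modXn (l e k : nat) (c : F) : (0 < l)%N ->
  ((c *: 'X^e) %% ('X^l - 1))`_k = c *+ (k == e %% l)%N.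
Proof.
by move=> hl; rewrite modpZl modXn // coefZ coefXn mulr_natr.
Qed.

Lemma poly_expand (p : {poly F}) (B : nat) : (size p <= B)%N ->
  p = \sum_(a < B) p`_a *: 'X^a.
Proof.
move=> hB; rewrite -poly_def; apply/polyP => k; rewrite coef_poly.
case: ltnP => // hk; rewrite nth_default //; exact: leq_trans hk.
Qed.

Lemma sum_collapse (n t : nat) (f : nat -> F) :
  \sum_(c < n) f c *+ (c == t :> nat) = f t *+ (t < n)%N.
Proof.
case: (ltnP t n) => ht.
  rewrite (bigD1 (Ordinal ht)) //= eqxx big1 ?addr0 // => i hi.
  suff -> : (nat_of_ord i == t) = false by [].
  by apply/negbTE; apply: contra hi => /eqP e; apply/eqP/val_inj.
rewrite big1 // => i _; suff -> : (nat_of_ord i == t) = false by [].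
by apply/negbTE; rewrite neq_ltn (leq_trans (ltn_ord i) ht).
Qed.

End Aux.

Lemma modE (l c : nat) : (c < l)%N -> ((l - c) %% l = if c == 0 then 0 else l - c)%N.
Proof.
move=> hc; case: eqP => [->|/eqP c0]; first by rewrite subn0 modnn.
by rewrite modn_small // ltn_subrL lt0n c0 (leq_ltn_trans _ hc).
Qed.

Lemma modar1 (l c j : nat) : (c < l)%N -> (j < l)%N ->
  (j == (l - c) %% l)%N = (c == (l - j) %% l)%N.
Proof.
move=> hc hj; rewrite (modE _ _ hc) (modE _ _ hj).
have [c0|c0] := eqVneq c 0%N; have [j0|j0] := eqVneq j 0%N;
  rewrite ?c0 ?j0 ?eqxx ?(negbTE c0) ?(negbTE j0) /=;
apply/eqP/eqP; lia.
Qed.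

Lemma modar2 (l a c n : nat) : (a < l)%N -> (c < l)%N ->
  ((a + (l - c) %% l) %% l == n %% l)%N = ((c + n) %% l == a)%N.
Proof.
move=> ha hc.
rewrite -[a in RHS](modn_small ha) [in RHS]eq_sym.
rewrite -(eqn_modDr c) -addnA.
have -> : ((a + ((l - c) %% l + c)) %% l = a %% l)%N.
  by rewrite -modnDmr modnDml (subnK (ltnW hc)) modnn addn0.
by rewrite [(n + c)%N]addnC.
Qed.

Lemma modar3 (l a c n N : nat) : (a < l)%N -> (c < l)%N ->
  ((N + n) %% l == 0)%N ->
  ((c + n) %% l == a)%N = ((a + N) %% l == c)%N.
Proof.
move=> ha hc /eqP h0.
rewrite -[a in LHS](modn_small ha) -[c in RHS](modn_small hc).
rewrite -(eqn_modDr N) -addnA [(n + N)%N]addnC -modnDmr h0 addn0.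
by rewrite [in RHS]eq_sym.
Qed.

Section Aux2.
Variable F : fieldType.

Lemma hat_expand (l : nat) (y : {poly F}) : (0 < l)%N -> (size y <= l)%N ->
  hatp l y = \sum_(c < l) y`_c *: 'X^((l - c) %% l).
Proof.
move=> hl hy; apply/polyP => j; rewrite coef_poly coef_sum.
under eq_bigr => c _ do rewrite coefZ coefXn mulr_natr.
case: ltnP => hj.
  under eq_bigr => c _ do rewrite (modar1 _ _ _ (ltn_ord c) hj).
  by rewrite (sum_collapse _ _ _ (fun c => y`_c)) ltn_mod hl.
rewrite big1 // => c _.
suff -> : (j == (l - c) %% l)%N = false by [].
apply/negbTE; rewrite neq_ltn; apply/orP; right.
by apply: (leq_trans _ hj); rewrite ltn_mod.
Qed.

Lemma bT_coef (l q n : nat) (b : {poly F}) : (0 < l)%N -> (size b <= l)%N ->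
  (b * \sum_(s < q) 'X^(s * l))`_n = b`_(n %% l) *+ (n < q * l)%N.
Proof.
move=> hl hb; rewrite {1}(poly_expand _ _ _ hb) mulr_suml coef_sum.
under eq_bigr => a _ do rewrite mulr_sumr coef_sum.
under eq_bigr => a _ do under eq_bigr => s _ do
  rewrite -scalerAl -exprD coefZ coefXn mulr_natr.
have key : forall (a : 'I_l) (s : 'I_q),
    (n == a + s * l)%N = (a == n %% l :> nat)%N && (s == n %/ l :> nat)%N.
  move=> a s; apply/idP/idP => [/eqP ->|/andP [/eqP ha /eqP hs]].
    rewrite addnC modnMDl divnMDl // modn_small // divn_small // addn0.
    by rewrite !eqxx.
  by rewrite {1}(divn_eq n l) -ha -hs addnC.
rewrite (eq_bigr (fun a : 'I_l => b`_a *+ (a == n %% l :> nat)%N *+ (n %/ l < q)%N)).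
  rewrite sumrMnl (sum_collapse _ _ _ (fun a => b`_a)) ltn_mod hl ltn_divLR //.
move=> a _.
rewrite (eq_bigr (fun s : 'I_q => b`_a *+ (a == n %% l :> nat)%N *+ (s == n %/ l :> nat)%N)).
  exact: (sum_collapse _ _ _ (fun _ => b`_a *+ (a == n %% l :> nat)%N)).
by move=> s _; rewrite key -mulrnA mulnb.
Qed.

End Aux2.

Section Aux3.
Variables (F : fieldType) (m : nat) (l : 'I_m -> nat).
Hypothesis hl : forall i, (0 < l i)%N.

Lemma size_modXl (L : nat) (p : {poly F}) : (0 < L)%N -> (size (p %% ('X^L - 1))%R <= L)%N.
Proof.
move=> hL; rewrite -ltnS -(size_Xn_sub_1 F hL) ltn_modp -size_poly_eq0.
by rewrite size_Xn_sub_1.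
Qed.

Lemma iter_shift (u : vec F m) (hu : inM l u) N i :
  iter N (shiftM l) u i = ('X^N * u i) %% ('X^(l i) - 1).
Proof.
elim: N => [|N IH] /=.
  by rewrite mul1r modp_small // size_Xn_sub_1 // ltnS hu.
by rewrite /shiftM /piM IH modp_mul mulrA -exprS.
Qed.

Lemma iter_coef (u : vec F m) (hu : inM l u) N i (j : nat) :
  (iter N (shiftM l) u i)`_j = \sum_(a < l i) (u i)`_a *+ ((a + N) %% l i == j)%N.
Proof.
rewrite iter_shift // {1}(poly_expand _ _ _ (hu i)) mulr_sumr modp_sum coef_sum.
apply: eq_bigr => a _.
by rewrite -scalerAr -exprD coef_modXn // addnC eq_sym.
Qed.

Lemma key (C : vec F m -> Prop) (hC : GQC_code l C) (u v : vec F m)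
  (hu : C u) (hv : dual l C v) (N : nat) :
  \sum_(i < m) \sum_(j < l i) \sum_(a < l i)
     (u i)`_a * (v i)`_j *+ ((a + N) %% l i == j)%N = 0.
Proof.
have huM : inM l u by case: hC => [[hM _] _]; exact: hM.
have hw : C (iter N (shiftM l) u).
  elim: N => [|N IH] //=; case: hC => _ hs; exact: hs.
case: hv => _ /(_ _ hw) H0; apply: (etrans _ H0); rewrite /stdform.
apply: eq_bigr => i _; apply: eq_bigr => j _.
rewrite iter_coef // mulr_suml; apply: eq_bigr => a _.
by rewrite mulrnAl.
Qed.

End Aux3.

Section Aux4.
Variables (F : fieldType) (m : nat) (l : 'I_m -> nat).
Hypothesis hl : forall i, (0 < l i)%N.

Lemma sp_zero (x y : vec F m) (hx : inM l x) (hy : inM l y)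
  (H : forall n, \sum_(i < m) \sum_(a < l i) \sum_(c < l i)
        (x i)`_a * (y i)`_c *+ ((c + n) %% l i == a)%N = 0) :
  scalar_prod l x y = 0.
Proof.
rewrite /scalar_prod; cbv zeta.
set L := sp_mod l x y.
have hdiv : forall i, (x i != 0) && (y i != 0) -> (l i %| L)%N.
  by move=> i hi; rewrite /L /sp_mod (bigD1 i) //=; exact: dvdn_lcml.
have hDT : forall i, (l i %| L)%N ->
    ('X^(l i) - 1) * \sum_(k < L %/ l i) 'X^(k * l i) = 'X^L - 1 :> {poly F}.
  move=> i hi; under eq_bigr => k _ do rewrite mulnC exprM.
  by rewrite -subrX1 -exprM mulnC divnK.
pose b i := (x i * hatp (l i) (y i)) %% ('X^(l i) - 1).
have hb : forall i k, (b i)`_k = \sum_(a < l i) \sum_(c < l i)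
     (x i)`_a * (y i)`_c *+ (k == (a + (l i - c) %% l i) %% l i)%N.
  move=> i k; rewrite /b (hat_expand _ _ _ (hl i) (hy i)).
  rewrite {1}(poly_expand _ _ _ (hx i)) mulr_suml modp_sum coef_sum.
  apply: eq_bigr => a _; rewrite mulr_sumr modp_sum coef_sum.
  apply: eq_bigr => c _.
  by rewrite -scalerAl -scalerAr -exprD scalerA coef_modXn.
have hP : \sum_(i < m | (x i != 0) && (y i != 0))
      x i * hatp (l i) (y i) * \sum_(k < L %/ l i) 'X^(k * l i) =
    (\sum_(i < m | (x i != 0) && (y i != 0))
       ((x i * hatp (l i) (y i)) %/ ('X^(l i) - 1))) * ('X^L - 1) +
    \sum_(i < m | (x i != 0) && (y i != 0)) b i * \sum_(k < L %/ l i) 'X^(k * l i).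
  rewrite mulr_suml -big_split; apply: eq_bigr => i hi /=.
  rewrite {1}(divp_eq (x i * hatp (l i) (y i)) ('X^(l i) - 1)) mulrDl.
  by rewrite -mulrA hDT // hdiv.
rewrite hP modpD modp_mull add0r.
suff -> : \sum_(i < m | (x i != 0) && (y i != 0))
    b i * \sum_(k < L %/ l i) 'X^(k * l i) = 0 by rewrite mod0p.
apply/polyP => n; rewrite coef0 coef_sum.
rewrite (eq_bigr (fun i => (b i)`_(n %% l i)%N *+ (n < L)%N)); last first.
  move=> i hi; rewrite bT_coef ?divnK ?hdiv //.
  exact: size_modXl.
rewrite sumrMnl.
suff -> : \sum_(i < m | (x i != 0) && (y i != 0)) (b i)`_(n %% l i)%N = 0 by rewrite mul0rn.
rewrite big_mkcond /=; apply: (etrans _ (H n)); apply: eq_bigr => i _.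
case: ifP => hS.
  rewrite hb; apply: eq_bigr => a _; apply: eq_bigr => c _.
  by rewrite eq_sym modar2.
move/negbT: hS; rewrite negb_and => /orP [] /negPn /eqP ->;
  rewrite big1 // => a _; rewrite big1 // => c _; rewrite coef0 ?mul0r ?mulr0 mul0rn //.
Qed.

End Aux4.

Theorem theorem1 (F : finFieldType) (m : nat) (l : 'I_m -> nat)
  (hl : forall i, (0 < l i)%N) (hmn : (m < \sum_(i < m) l i)%N)
  (C : vec F m -> Prop) (hC : GQC_code l C)
  (lt : rel (nat * 'I_m)) (hlt : monomial_order lt)
  (g h : 'I_m -> vec F m)
  (hg : groebner_basis lt (Cbar l C) g)
  (hh : groebner_basis lt (Cbar l (dual l C)) h) :
  forall i j : 'I_m,
    scalar_prod l (piM l (g i)) (piM l (h j)) = 0 /\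
    scalar_prod l (piM l (h j)) (piM l (g i)) = 0.
Proof.
move=> i j.
have hu : C (piM l (g i)) by case: hg => H _; exact: H.
have hv : dual l C (piM l (h j)) by case: hh => H _; exact: H.
have huM : inM l (piM l (g i)) by case: hC => [[hM _] _]; exact: hM.
have hvM : inM l (piM l (h j)) by case: hv.
split.
  apply: (sp_zero _ _ _ hl _ _ huM hvM) => n.
  pose P := (\prod_(k < m) l k)%N.
  have hP : forall k, (l k %| P)%N by move=> k; rewrite /P (bigD1 k) //= dvdn_mulr.
  have P0 : (0 < P)%N by rewrite /P prodn_gt0.
  apply: (etrans _ (key _ _ _ hl _ hC _ _ hu hv ((P - 1) * n))).
  apply: eq_bigr => k _; rewrite exchange_big /=.
  apply: eq_bigr => a _; apply: eq_bigr => c _.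
  rewrite (modar3 _ _ _ _ ((P - 1) * n) (ltn_ord c) (ltn_ord a)) //.
  have -> : ((P - 1) * n + n = P * n)%N by rewrite mulnBl mul1n subnK // leq_pmull.
  exact: (dvdn_mulr _ (hP k)).
apply: (sp_zero _ _ _ hl _ _ hvM huM) => n.
apply: (etrans _ (key _ _ _ hl _ hC _ _ hu hv n)).
apply: eq_bigr => k _; apply: eq_bigr => a _; apply: eq_bigr => c _.
by rewrite mulrC.
Qed.
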